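(* Let $L$ be a lattice. The following are equivalent: (1) $\exists$ has an $\omega$-strategy in the $(m,k)$-game on $L$ with starting position $(\{a\},\{b\})$ for all $a,b\in L$ with $a\not\leq b$ and for all $3\leq m,k\leq\omega$; (2) $\exists$ has a $5$-strategy in the $(3,3)$-game on $L$ with starting position $(\{a\},\{b\})$ for all $a,b\in L$ with $a\not\leq b$; (3) $L$ is distributive.
   Context: Work in ZFC. For a poset $P$, $2\leq\alpha,\beta\leq\omega$ and $U_0,V\subseteq P$, the $(\alpha,\beta)$-game with starting position $(U_0,V)$ is played between $\forall$ and $\exists$ in rounds $0,1,2,\ldots$; a set $U$ is maintained, initially $U_0$, with $V$ fixed. Each round $\forall$ moves and $\exists$ responds: (1) if $b\geq a$ for some $a\in U$, $\forall$ may play $(b)$ and $\exists$ must add $b$ to $U$; (2) if $A\subseteq U$ with $|A|<\alpha$ and $\bigwedge A$ exists in $P$, $\forall$ may play $A$ and $\exists$ must add $\bigwedge A$ to $U$; (3) if $B\subseteq P$ with $|B|<\beta$ and $\bigvee B$ exists in $P$ and lies in $U$, $\forall$ may play $B$ and $\exists$ must choose some $b\in B$ and add it to $U$. $\forall$ wins in round $n$ if $U\cap V\neq\emptyset$ at the beginning of round $n$. $\exists$ has an $n$-strategy if she can guarantee that $\forall$ does not win until at least round $n+1$, and an $\omega$-strategy if she can guarantee that $\forall$ never wins. *)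

(* Defs.v *)
From HB Require Import structures.
From Stdlib Require List.
From mathcomp Require Import all_boot all_order.
Set Implicit Arguments. Unset Strict Implicit. Unset Printing Implicit Defensive.
Import Order.Theory.
Local Open Scope order_scope.

(* Cardinal bounds 2 <= alpha <= omega: either a finite n or omega. *)
Inductive gcard := Fin of nat | Omega.

Definition card_lt (n : nat) (c : gcard) : Prop :=
  match c with Fin m => (n < m)%N | Omega => True end.
Definition card_ge (n : nat) (c : gcard) : Prop :=
  match c with Fin m => (n <= m)%N | Omega => True end.

Section Game.
Context {disp : Order.disp_t} {P : porderType disp}.

Definition is_glb (A : seq P) (x : P) : Prop :=
  (forall y, y \in A -> x <= y) /\
  (forall z, (forall y, y \in A -> z <= y) -> z <= x).

Definition is_lub (B : seq P) (x : P) : Prop :=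
  (forall y, y \in B -> y <= x) /\
  (forall z, (forall y, y \in B -> y <= z) -> x <= z).

(* Moves of player forall.  Sets played in moves (2),(3) have cardinality
   < alpha <= omega, hence are finite; they are given as sequences, whose
   underlying set is the set of their elements. *)
Inductive amove := MUp of P | MMeet of seq P | MJoin of seq P.

Definition legal (alpha beta : gcard) (U : P -> Prop) (mv : amove) : Prop :=
  match mv with
  | MUp b => exists2 a, U a & a <= b
  | MMeet A => (forall y, y \in A -> U y) /\ card_lt (size (undup A)) alpha /\
               exists x, is_glb A x
  | MJoin B => card_lt (size (undup B)) beta /\ exists2 x, is_lub B x & U x
  end.

Definition valid_resp (mv : amove) (c : P) : Prop :=
  match mv with
  | MUp b => c = b
  | MMeet A => is_glb A c
  | MJoin B => c \in B
  end.

(* history of completed rounds, most recent first *)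
Definition history := seq (amove * P).

Definition position (U0 : P -> Prop) (h : history) : P -> Prop :=
  fun y => U0 y \/ exists mv, List.In (mv, y) h.

Definition strategy := history -> amove -> P.

Inductive reachable (alpha beta : gcard) (U0 : P -> Prop) (s : strategy)
  : history -> Prop :=
| reach_nil : reachable alpha beta U0 s [::]
| reach_cons h mv : reachable alpha beta U0 s h ->
    legal alpha beta (position U0 h) mv ->
    reachable alpha beta U0 s ((mv, s h mv) :: h).

Definition disjointP (U V : P -> Prop) : Prop := forall x, U x -> V x -> False.

(* exists has an n-strategy in the (alpha,beta)-game from (U0,V): forall does
   not win in rounds 0..n, i.e. the position at the beginning of each of the
   rounds 0..n is disjoint from V, and exists answers legally in rounds
   0..n-1. *)
Definition n_strategy (n : nat) (alpha beta : gcard) (U0 V : P -> Prop) : Prop :=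
  exists s : strategy, forall h, reachable alpha beta U0 s h -> (size h <= n)%N ->
    disjointP (position U0 h) V /\
    ((size h < n)%N -> forall mv, legal alpha beta (position U0 h) mv ->
                       valid_resp mv (s h mv)).

Definition omega_strategy (alpha beta : gcard) (U0 V : P -> Prop) : Prop :=
  exists s : strategy, forall h, reachable alpha beta U0 s h ->
    disjointP (position U0 h) V /\
    (forall mv, legal alpha beta (position U0 h) mv -> valid_resp mv (s h mv)).

End Game.

Definition distributive_lattice (d : Order.disp_t) (L : latticeType d) : Prop :=
  forall x y z : L, x `&` (y `|` z) = (x `&` y) `|` (x `&` z).

(* Main.v *)
Require Import Defs.
From HB Require Import structures.
From mathcomp Require Import all_boot all_order.
From Stdlib Require Import ClassicalEpsilon Classical.
Set Implicit Arguments. Unset Strict Implicit.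
Import Order.Theory.
Local Open Scope order_scope.

Section Helpers.
Context {d : Order.disp_t} {L : latticeType d}.
Variables (a b : L).

Definition mt (l : seq L) : L := foldr (fun y acc => y `&` acc) a l.

Lemma mt_le_a l : mt l <= a.
Proof. elim: l => [|y l IH] /=; first exact: lexx. exact: le_trans (leIr _ _) IH. Qed.

Lemma mt_le_mem l y : y \in l -> mt l <= y.
Proof.
elim: l => [|x l IH] //=; rewrite inE => /orP [/eqP ->|Hy]; first exact: leIl.
exact: le_trans (leIr _ _) (IH Hy).
Qed.

Lemma le_mt l z : z <= a -> (forall y, y \in l -> z <= y) -> z <= mt l.
Proof.
move=> Ha; elim: l => [|x l IH] Hl /=; first exact: Ha.
rewrite lexI (Hl x (mem_head _ _)) /=; apply: IH => y Hy; apply: Hl; by rewrite inE Hy orbT.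
Qed.

Lemma mt_sub l l' : {subset l' <= l} -> mt l <= mt l'.
Proof. move=> S; apply: le_mt; first exact: mt_le_a. by move=> y /S; apply: mt_le_mem. Qed.

Definition Inv (U : L -> Prop) : Prop :=
  forall l, (forall y, y \in l -> U y) -> ~ (mt l <= b).

Lemma Inv_ext (U V : L -> Prop) : (forall y, U y <-> V y) -> Inv U -> Inv V.
Proof. move=> E I l Hl; apply: I => y /Hl; apply E. Qed.

Lemma split_l (U : L -> Prop) c l : (forall y, y \in l -> U y \/ y = c) ->
  exists2 l', (forall y, y \in l' -> U y) & mt l' `&` c <= mt l.
Proof.
elim: l => [|y l IH] Hl.
  by exists [::] => //=; apply: leIl.
have [l' H1 H2] : exists2 l', (forall y, y \in l' -> U y) & mt l' `&` c <= mt l.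
  by apply: IH => z Hz; apply: Hl; rewrite inE Hz orbT.
case: (Hl y (mem_head _ _)) => [Uy|->].
  exists (y :: l').
    by move=> z; rewrite inE => /orP [/eqP ->|/H1].
  rewrite /= lexI; apply/andP; split.
    exact: le_trans (leIl _ _) (leIl _ _).
  apply: le_trans H2; exact: leI2 (leIr _ _) (lexx _).
exists l' => //=; rewrite lexI leIr H2 //.
Qed.

Lemma extend (U : L -> Prop) A c : Inv U -> (forall y, y \in A -> U y) ->
  mt A <= c -> Inv (fun y => U y \/ y = c).
Proof.
move=> I HA Hc l Hl Hb.
have [l' H1 H2] := split_l Hl.
apply: (I (l' ++ A)).
  by move=> y; rewrite mem_cat => /orP [/H1|/HA].
apply: le_trans Hb; apply: le_trans H2; rewrite lexI; apply/andP; split.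
  by apply: mt_sub => y Hy; by rewrite mem_cat Hy.
apply: le_trans Hc; apply: mt_sub => y Hy; by rewrite mem_cat Hy orbT.
Qed.

Lemma notInv (V : L -> Prop) : ~ Inv V -> exists2 l, (forall y, y \in l -> V y) & mt l <= b.
Proof.
move=> H; apply: NNPP => H0; apply: H => l Hl Hle; apply: H0; by exists l.
Qed.

Lemma collect (U : L -> Prop) (B : seq L) :
  (forall c, c \in B -> exists2 l, (forall y, y \in l -> U y) & mt l `&` c <= b) ->
  exists2 L0, (forall y, y \in L0 -> U y) & forall c, c \in B -> mt L0 `&` c <= b.
Proof.
elim: B => [|c B IH] H; first by exists [::].
have [l H1 H2] := H c (mem_head _ _).
have [L0 H3 H4] : exists2 L0, (forall y, y \in L0 -> U y) & forall c, c \in B -> mt L0 `&` c <= b.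
  by apply: IH => c' Hc'; apply: H; rewrite inE Hc' orbT.
exists (l ++ L0).
  by move=> y; rewrite mem_cat => /orP [/H1|/H3].
move=> c'; rewrite inE => /orP [/eqP ->|Hc'].
  apply: le_trans H2; apply: leI2 (lexx _); apply: mt_sub => y Hy; by rewrite mem_cat Hy.
apply: le_trans (H4 _ Hc'); apply: leI2 (lexx _); apply: mt_sub => y Hy; by rewrite mem_cat Hy orbT.
Qed.

Lemma le_foldU c0 (B : seq L) y : y \in c0 :: B -> y <= foldr Order.join c0 B.
Proof.
elim: B c0 => [|c B IH] c0 /=; first by rewrite inE => /eqP ->.
rewrite !inE => /orP [/eqP Ey|/orP [/eqP Ey|Hy]].
- apply: le_trans (leUr _ _); apply: IH; by rewrite Ey mem_head.
- rewrite Ey; exact: leUl.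
- apply: le_trans (leUr _ _); apply: IH; by rewrite inE Hy orbT.
Qed.

Lemma dist_lub (D : distributive_lattice L) (B : seq L) j w :
  is_lub B j -> (forall c, c \in B -> w `&` c <= b) -> w `&` j <= b.
Proof.
case: B => [|c0 B] [Hj1 Hj2] Hw.
  by apply: le_trans (leIr _ _) _; apply: Hj2.
have J1 : j <= foldr Order.join c0 B by apply: Hj2 => y; apply: le_foldU.
apply: le_trans (leI2 (lexx w) J1) _.
have Hw0 : w `&` c0 <= b by apply: Hw; exact: mem_head.
have HwB : forall c, c \in B -> w `&` c <= b by move=> c Hc; apply: Hw; rewrite inE Hc orbT.
elim: B HwB {Hj1 Hj2 Hw J1} => [|c B IH] HwB //=.
rewrite D leUx HwB ?mem_head //= IH // => c' Hc'; apply: HwB; by rewrite inE Hc' orbT.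
Qed.

Lemma join_step (D : distributive_lattice L) (U : L -> Prop) (B : seq L) j :
  Inv U -> U j -> is_lub B j -> exists2 c, c \in B & Inv (fun y => U y \/ y = c).
Proof.
move=> I Uj Hl; apply: NNPP => H.
have H' : forall c, c \in B -> exists2 l, (forall y, y \in l -> U y) & mt l `&` c <= b.
  move=> c Hc.
  have [l Hl1 Hl2] : exists2 l, (forall y, y \in l -> U y \/ y = c) & mt l <= b.
    by apply: notInv => HI; apply: H; exists c.
  have [l' H1 H2] := split_l Hl1; exists l' => //; exact: le_trans H2 Hl2.
have [L0 H1 H2] := collect H'.
apply: (I (j :: L0)).
  by move=> y; rewrite inE => /orP [/eqP ->|/H1].
have Hw : mt (j :: L0) `&` j <= b.
  apply: (dist_lub D Hl) => c Hc; apply: le_trans (H2 c Hc).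
  by apply: leI2 (lexx _); apply: mt_sub => y Hy; by rewrite inE Hy orbT.
apply: le_trans Hw; rewrite lexI lexx /=; exact: mt_le_mem (mem_head _ _).
Qed.

End Helpers.

Section Strat.
Context {d : Order.disp_t} {L : latticeType d}.
Variables (a b : L).

Definition strat : @strategy _ L := fun h mv => match mv with
  | MUp c => c
  | MMeet A => epsilon (inhabits a) (fun x => is_glb A x)
  | MJoin B => epsilon (inhabits a) (fun c => c \in B /\
       Inv a b (fun y => position (fun y => y = a) h y \/ y = c))
  end.

Lemma pos_cons (U0 : L -> Prop) h mv c y :
  position U0 ((mv, c) :: h) y <-> position U0 h y \/ y = c.
Proof.
rewrite /position /=; split.
- case=> [H|[mv' [E|H]]]; first by left; left.
  + by right; case: E.
  + by left; right; exists mv'.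
- case=> [[H|[mv' H]]|->]; first by left.
  + by right; exists mv'; right.
  + by right; exists mv; left.
Qed.

Lemma inv_reach (D : distributive_lattice L) m k h : ~~ (a <= b) ->
  reachable m k (fun y => y = a) strat h -> Inv a b (position (fun y => y = a) h).
Proof.
move=> hab; elim=> [|h' mv R IH Lg].
  move=> l Hl Hb; apply: (negP hab); apply: le_trans Hb; apply: le_mt => // y /Hl.
  by case=> [->|[mv [] ]].
apply: Inv_ext; first by move=> y; apply: iff_sym; apply: pos_cons.
case: mv Lg => [c|A|B] /=.
- case=> u Pu Hu; apply: (extend (A := [:: u])) => //.
    by move=> y; rewrite inE => /eqP ->.
  by apply: le_trans Hu; apply: mt_le_mem; apply: mem_head.
- case=> HA [_ Hx]; set c := epsilon _ _.
  have Hc : is_glb A c by apply: epsilon_spec.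
  apply: (extend (A := A)) => //; apply: Hc.2 => y Hy; exact: mt_le_mem.
- case=> _ [j Hj Pj].
  have [c' H1 H2] := join_step D IH Pj Hj.
  have := epsilon_spec (inhabits a) (fun c => c \in B /\ Inv a b (fun y => position (fun y => y = a) h' y \/ y = c)) (ex_intro _ c' (conj H1 H2)).
  by case.
Qed.

Lemma valid (D : distributive_lattice L) m k h mv : ~~ (a <= b) ->
  reachable m k (fun y => y = a) strat h ->
  legal m k (position (fun y => y = a) h) mv -> valid_resp mv (strat h mv).
Proof.
move=> hab R; case: mv => [c|A|B] /=.
- by [].
- by case=> _ [_ Hx]; apply: epsilon_spec.
- case=> _ [j Hj Pj].
  have [c' H1 H2] := join_step D (inv_reach D hab R) Pj Hj.
  have := epsilon_spec (inhabits a) (fun c => c \in B /\ Inv a b (fun y => position (fun y => y = a) h y \/ y = c)) (ex_intro _ c' (conj H1 H2)).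
  by case.
Qed.

End Strat.

Theorem corollary6p3 (d : Order.disp_t) (L : latticeType d) :
  [<-> (forall a b : L, ~~ (a <= b) -> forall m k : gcard, card_ge 3 m -> card_ge 3 k ->
          omega_strategy m k (fun y => y = a) (fun y => y = b));
       (forall a b : L, ~~ (a <= b) ->
          n_strategy 5 (Fin 3) (Fin 3) (fun y => y = a) (fun y => y = b));
       distributive_lattice L].
Proof.
tfae.
- move=> H0 a b hab; have [s Hs] := H0 a b hab (Fin 3) (Fin 3) isT isT.
  exists s => h R _; split; first exact: (Hs h R).1.
  move=> _; exact: (Hs h R).2.
- move=> H1 x y z.
  set a := x `&` (y `|` z); set b := (x `&` y) `|` (x `&` z).
  have ba : b <= a.
    rewrite /a /b leUx !lexI !leIl /=; apply/andP; split.
      exact: le_trans (leIr _ _) (leUl _ _).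
    exact: le_trans (leIr _ _) (leUr _ _).
  case ab: (a <= b); first by apply/le_anti; rewrite ab ba.
  exfalso; have [s Hs] := H1 a b (negbT ab).
  set U0 := (fun y => y = a).
  set mv0 := MUp (y `|` z).
  have R0 : reachable (Fin 3) (Fin 3) U0 s [::] by constructor.
  have L0 : legal (Fin 3) (Fin 3) (position U0 [::]) mv0.
    by exists a; [left | exact: leIr].
  have V0 : s [::] mv0 = y `|` z by exact: ((Hs _ R0 isT).2 isT mv0 L0).
  set h1 := [:: (mv0, s [::] mv0)].
  have R1 : reachable (Fin 3) (Fin 3) U0 s h1 by constructor.
  set mv1 := MJoin [:: y; z].
  have L1 : legal (Fin 3) (Fin 3) (position U0 h1) mv1.
    split; first exact: leq_ltn_trans (size_undup _) _.
    exists (y `|` z).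
      split.
        by move=> w; rewrite !inE => /orP [/eqP->|/eqP->]; [exact: leUl|exact: leUr].
      by move=> w Hw; rewrite leUx; apply/andP; split; apply: Hw; rewrite !inE eqxx ?orbT.
    right; exists mv0; rewrite /h1 V0; by left.
  set c1 := s h1 mv1.
  have V1 : c1 \in [:: y; z] by exact: ((Hs _ R1 isT).2 isT mv1 L1).
  set h2 := (mv1, c1) :: h1.
  have R2 : reachable (Fin 3) (Fin 3) U0 s h2 by constructor.
  set mv2 := MMeet [:: a; c1].
  have L2 : legal (Fin 3) (Fin 3) (position U0 h2) mv2.
    split.
      move=> w; rewrite !inE => /orP [/eqP->|/eqP->]; first by left.
      by right; exists mv1; left.
    split; first exact: leq_ltn_trans (size_undup _) _.
    exists (a `&` c1); split.
      by move=> w; rewrite !inE => /orP [/eqP->|/eqP->]; [exact: leIl|exact: leIr].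
    by move=> w Hw; rewrite lexI; apply/andP; split; apply: Hw; rewrite !inE eqxx ?orbT.
  set c2 := s h2 mv2.
  have V2 : is_glb [:: a; c1] c2 by exact: ((Hs _ R2 isT).2 isT mv2 L2).
  have c2b : c2 <= b.
    have c2x : c2 <= x by apply: le_trans (V2.1 a (mem_head _ _)) (leIl _ _).
    have c2c : c2 <= c1 by apply: V2.1; rewrite !inE eqxx orbT.
    move: V1; rewrite !inE => /orP [/eqP E|/eqP E]; rewrite E in c2c.
      by apply: le_trans (leUl _ _); rewrite lexI c2x c2c.
    by apply: le_trans (leUr _ _); rewrite lexI c2x c2c.
  set h3 := (mv2, c2) :: h2.
  have R3 : reachable (Fin 3) (Fin 3) U0 s h3 by constructor.
  set mv3 := MUp b.
  have L3 : legal (Fin 3) (Fin 3) (position U0 h3) mv3.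
    by exists c2; [right; exists mv2; left|].
  have V3 : s h3 mv3 = b by exact: ((Hs _ R3 isT).2 isT mv3 L3).
  set h4 := (mv3, s h3 mv3) :: h3.
  have R4 : reachable (Fin 3) (Fin 3) U0 s h4 by constructor.
  apply: ((Hs _ R4 isT).1 b) => //.
  by right; exists mv3; left; rewrite V3.
- move=> D a b hab m k _ _; exists (strat a b) => h R; split.
  + move=> x Px Ex; rewrite Ex in Px.
    apply: (inv_reach D hab R (l := [:: b])); first by move=> y; rewrite inE => /eqP ->.
    exact: mt_le_mem (mem_head _ _).
  + move=> mv Lg; exact: (valid D hab R Lg).
Qed.
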